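(* Let $G$ be a Tutte-Berge graph and $U\subseteq V(G)$. Let $G_1$ and $G_2$ be the induced subgraphs of $G$ on $U$ and on $V(G)\setminus U$, respectively. Assume there is a maximum matching $M$ of $G$ and a partition $M=M_1\cup M_2$ with all edges of $M_1$ in $G_1$ and all edges of $M_2$ in $G_2$. Then $G_1$ and $G_2$ are Tutte-Berge graphs.
   Context: $\nu(G)$ is the matching number of $G$. For $U\subseteq V(G)$, $N_G(U)$ is the set of vertices adjacent to at least one vertex of $U$. $G$ is a Tutte-Berge graph if there exists an independent set $T$ of $G$ with $|T| = |N_G(T)| + |V(G)| - 2\nu(G)$. *)

(* Defs.v *)
From mathcomp Require Import all_boot.
Set Implicit Arguments. Unset Strict Implicit. Unset Printing Implicit Defensive.

(* Graph notions are defined for the subgraph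
   induced on a vertex set S; the whole graph G is the case S = [set: T]. *)

Definition simple_graph (T : finType) (e : rel T) : Prop :=
  irreflexive e /\ symmetric e.

Definition is_edge_in (T : finType) (e : rel T) (S : {set T}) (f : {set T}) : bool :=
  [exists x, exists y, [&& x \in S, y \in S, e x y & f == [set x; y]]].

Definition is_matching (T : finType) (e : rel T) (S : {set T}) (M : {set {set T}}) : bool :=
  [forall f in M, is_edge_in e S f] &&
  [forall f in M, forall g in M, (f != g) ==> [disjoint f & g]].

Definition nu (T : finType) (e : rel T) (S : {set T}) : nat :=
  \max_(M : {set {set T}} | is_matching e S M) #|M|.

Definition is_maximum_matching (T : finType) (e : rel T) (S : {set T})
  (M : {set {set T}}) : bool :=
  is_matching e S M && (#|M| == nu e S).

Definition nbhd (T : finType) (e : rel T) (S U : {set T}) : {set T} :=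
  [set y in S | [exists x in U, e x y]].

Definition independent (T : finType) (e : rel T) (S I : {set T}) : bool :=
  (I \subset S) && [forall x in I, forall y in I, ~~ e x y].

(* Tutte-Berge graph: exists independent I with |I| = |N(I)| + |V| - 2 nu.
   Stated without truncated subtraction (|V| >= 2 nu always). *)
Definition tutte_berge (T : finType) (e : rel T) (S : {set T}) : Prop :=
  exists I : {set T}, independent e S I /\
    #|I| + 2 * nu e S = #|nbhd e S I| + #|S|.

(* Main.v *)
Require Import Defs.
From mathcomp Require Import all_boot.
From mathcomp Require Import zify.
Set Implicit Arguments. Unset Strict Implicit. Unset Printing Implicit Defensive.

Section S.
Variables (T : finType) (e : rel T).
Hypothesis (He : simple_graph e).

Lemma ub_aux n : forall (S I : {set T}) (M : {set {set T}}),
  #|M| = n -> is_matching e S M -> independent e S I ->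
  #|I| + 2 * n <= #|nbhd e S I| + #|S|.
Proof.
elim: n => [|n IH] S I M hM hmat hind.
  move: hind => /andP[/subset_leq_card ? _]; lia.
have [f fM] : exists f, f \in M.
  by apply/set0Pn; rewrite -card_gt0 hM.
move: (hmat) => /andP[/forall_inP hedge /forall_inP hdis].
have := hedge f fM => /existsP[x /existsP[y /and4P[xS yS exy /eqP fE]]].
have xy : x != y by apply: contraTneq exy => ->; case: He => irr _; rewrite irr.
set S' := S :\: f; set I' := I :\: f; set M' := M :\ f.
have hmat' : is_matching e S' M'.
  apply/andP; split.
  - apply/forall_inP => g /setD1P[gf gM].
    have := hedge g gM => /existsP[u /existsP[v /and4P[uS vS euv /eqP gE]]].
    move/forall_inP: (hdis g gM) => /(_ f fM) /implyP /(_ gf) dgf.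
    have uf : u \notin f by apply/negP => uf; move: (disjointFl dgf uf); rewrite gE !inE eqxx.
    have vf : v \notin f by apply/negP => vf; move: (disjointFl dgf vf); rewrite gE !inE eqxx orbT.
    apply/existsP; exists u; apply/existsP; exists v.
    by rewrite !inE uf vf uS vS euv gE eqxx.
  - apply/forall_inP => g /setD1P[_ gM]; apply/forall_inP => h /setD1P[_ hM'].
    exact: (forall_inP (hdis g gM) h hM').
have hind' : independent e S' I'.
  move: hind => /andP[sIS /forall_inP hi]; apply/andP; split.
    by apply: setSD.
  apply/forall_inP => a /setDP[aI _]; apply/forall_inP => b /setDP[bI _].
  exact: (forall_inP (hi a aI) b bI).
have hM' : #|M'| = n by move: hM; rewrite (cardsD1 f M) fM add1n => -[].
have := IH S' I' M' hM' hmat' hind'.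
have f2 : #|f| = 2 by rewrite fE cards2 xy.
have fS : f \subset S by rewrite fE; apply/subsetP => z; rewrite !inE => /orP[]/eqP->.
have hS : #|S :&: f| + #|S'| = #|S| by apply: cardsID.
rewrite (setIidPr fS) f2 in hS.
have hI : #|I :&: f| + #|I'| = #|I| by apply: cardsID.
set N := nbhd e S I.
have hN : #|N :&: f| + #|N :\: f| = #|N| by apply: cardsID.
have hN' : #|nbhd e S' I'| <= #|N :\: f|.
  apply: subset_leq_card; apply/subsetP => z; rewrite !inE.
  move=> /andP[/andP[zf zS] /existsP[w /andP[wI' ewz]]].
  rewrite zf zS /=; apply/existsP; exists w; move: wI'; rewrite !inE => /andP[_ ->].
  by rewrite ewz.
have hIN : #|I :&: f| <= #|N :&: f|.
  move: hind => /andP[_ /forall_inP hindep].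
  have nI : forall a b, a \in I -> b \in I -> ~~ e a b.
    by move=> a b aI bI; exact: (forall_inP (hindep a aI) b bI).
  case xI: (x \in I); last case yI: (y \in I).
  - have yI : y \notin I by apply/negP => yI; move: (nI x y xI yI); rewrite exy.
    have yN : y \in N :&: f by rewrite !inE yS fE !inE eqxx orbT andbT; apply/existsP; exists x; rewrite xI exy.
    have : I :&: f \subset [set x].
      apply/subsetP => z; rewrite fE !inE => /andP[zI /orP[]/eqP zE]; subst z => //.
      by rewrite zI in yI.
    move/subset_leq_card; rewrite cards1 => h1.
    have : 0 < #|N :&: f| by apply/card_gt0P; exists y.
    exact: leq_trans h1.
  - have eyx : e y x by case: He => _ sym; rewrite sym.
    have xN : x \in N :&: f by rewrite !inE xS fE !inE eqxx andbT; apply/existsP; exists y; rewrite yI eyx.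
    have : I :&: f \subset [set y].
      apply/subsetP => z; rewrite fE !inE => /andP[zI /orP[]/eqP zE]; subst z => //.
      by rewrite zI in xI.
    move/subset_leq_card; rewrite cards1 => h1.
    have : 0 < #|N :&: f| by apply/card_gt0P; exists x.
    exact: leq_trans h1.
  - have : I :&: f \subset set0.
      apply/subsetP => z; rewrite fE !inE => /andP[zI /orP[]/eqP zE]; subst z.
      + by rewrite zI in xI.
      + by rewrite zI in yI.
    move/subset_leq_card; by rewrite cards0 leqn0 => /eqP ->.
move=> hih; move: hih hS hI hN hN' hIN; clear; lia.
Qed.

Lemma nu_ge S M : is_matching e S M -> #|M| <= nu e S.
Proof. move=> h; rewrite /nu; exact: (@leq_bigmax_cond _ (is_matching e S) (fun M => #|M|) M h). Qed.

Lemma match_restr (U : {set T}) (M M1 : {set {set T}}) : is_matching e [set: T] M -> M1 \subset M ->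
  (forall f, f \in M1 -> f \subset U) -> is_matching e U M1.
Proof.
move=> /andP[/forall_inP hedge /forall_inP hdis] /subsetP sub hU.
apply/andP; split.
- apply/forall_inP => f fM1.
  have := hedge f (sub f fM1) => /existsP[x /existsP[y /and4P[_ _ exy /eqP fE]]].
  have := hU f fM1; rewrite fE => /subsetP fU.
  apply/existsP; exists x; apply/existsP; exists y.
  by rewrite !fU ?exy ?fE ?eqxx // !inE eqxx ?orbT.
- apply/forall_inP => f fM1; apply/forall_inP => g gM1.
  exact: (forall_inP (hdis f (sub f fM1)) g (sub g gM1)).
Qed.

Lemma indep_restr (U I : {set T}) : independent e [set: T] I -> independent e U (I :&: U).
Proof.
move=> /andP[_ /forall_inP hi]; apply/andP; split; first exact: subsetIr.
apply/forall_inP => a /setIP[aI _]; apply/forall_inP => b /setIP[bI _].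
exact: (forall_inP (hi a aI) b bI).
Qed.

Lemma nbhd_restr (U I : {set T}) : nbhd e U (I :&: U) \subset nbhd e [set: T] I :&: U.
Proof.
apply/subsetP => z; rewrite !inE => /andP[zU /existsP[w /andP[wI ewz]]].
rewrite zU andbT; apply/existsP; exists w; move: wI; rewrite inE => /andP[-> _].
by rewrite ewz.
Qed.

Lemma side (U : {set T}) (M M1 M2 : {set {set T}}) I :
  independent e [set: T] I ->
  #|I| + 2 * #|M| = #|nbhd e [set: T] I| + #|[set: T]| ->
  is_matching e [set: T] M ->
  M = M1 :|: M2 -> [disjoint M1 & M2] ->
  (forall f, f \in M1 -> f \subset U) ->
  (forall f, f \in M2 -> f \subset ~: U) ->
  tutte_berge e U.
Proof.
move=> hind hTB hmat hMe hdis hU1 hU2.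
have s1 : M1 \subset M by rewrite hMe subsetUl.
have s2 : M2 \subset M by rewrite hMe subsetUr.
have m1 := match_restr hmat s1 hU1.
have m2 := match_restr hmat s2 hU2.
have i1 := indep_restr U hind.
have i2 := indep_restr (~: U) hind.
have h1 := ub_aux (erefl _) m1 i1.
have h2 := ub_aux (erefl _) m2 i2.
have hI : #|I :&: U| + #|I :&: ~: U| = #|I| by rewrite -setDE cardsID.
have hM : #|M| = #|M1| + #|M2|.
  by rewrite hMe cardsU (disjoint_setI0 hdis) cards0 subn0.
have hN : #|nbhd e U (I :&: U)| + #|nbhd e (~: U) (I :&: ~: U)| <= #|nbhd e [set: T] I|.
  have a := subset_leq_card (nbhd_restr U I).
  have b := subset_leq_card (nbhd_restr (~: U) I).
  have c : #|nbhd e [set: T] I :&: U| + #|nbhd e [set: T] I :&: ~: U| = #|nbhd e [set: T] I| by rewrite -setDE cardsID.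
  lia.
have hV : #|U| + #|~: U| = #|[set: T]| by rewrite cardsC cardsT.
exists (I :&: U); split => //.
have nuE : nu e U = #|M1|.
  apply/eqP; rewrite eqn_leq nu_ge // andbT; apply/bigmax_leqP => M' hM'.
  have := ub_aux (erefl _) hM' i1; lia.
rewrite nuE; lia.
Qed.

End S.

Theorem lemma2p8 (T : finType) (e : rel T) (U : {set T})
  (M M1 M2 : {set {set T}}) :
  simple_graph e ->
  tutte_berge e [set: T] ->
  is_maximum_matching e [set: T] M ->
  M = M1 :|: M2 -> [disjoint M1 & M2] ->
  (forall f, f \in M1 -> f \subset U) ->
  (forall f, f \in M2 -> f \subset ~: U) ->
  tutte_berge e U /\ tutte_berge e (~: U).
Proof.
move=> He [I [hind hTB]] /andP[hmat /eqP hnu] hMe hdis hU1 hU2.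
rewrite -hnu in hTB.
split.
- exact: (side He hind hTB hmat hMe hdis hU1 hU2).
- apply: (side He hind hTB hmat (M1 := M2) (M2 := M1)).
  + by rewrite hMe setUC.
  + by rewrite disjoint_sym.
  + exact: hU2.
  + by move=> f /hU1; rewrite setCK.
Qed.
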